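(* Let $n\ge2$, let $\mathbf{A}=(a_{ij})$ be an $n\times n$ matrix over a field, let $t=\lfloor n/2\rfloor+1$, and assume $a_{it}\ne0$ for all $i\in[n]$. Let $\mathbf{A}|_t$ be the matrix with $(i,j)$ entry $a_{ij}/a_{it}$. Then $\mathrm{per}(\mathbf{A})=\big(\prod_{i=1}^n a_{it}\big)\,\mathrm{per}(\mathbf{A}|_t)$, and the following procedure computes $\mathrm{per}(\mathbf{A})$: (i) compute the $n(n-1)$ entries $a_{ij}/a_{it}$, $j\neq t$; (ii) compute the sum-product flow on $\mathcal{T}_n(\mathbf{A}|_t)$, where one multiplication is performed for each edge not leaving the root and not entering layer $V_t$ (edges into $V_t$ have label $1$), and $|E|-|V|+1$ additions are performed; (iii) multiply $\mu(\mathrm{toor})$ by $a_{1t},\dots,a_{nt}$ one at a time. The total number of multiplications/divisions used is exactly $$n2^{n-1}-\left\lceil \tfrac n2\right\rceil\binom{n}{\lfloor n/2\rfloor}+n^2-n,$$ and the number of additions is exactly $(n-2)2^{n-1}+1$.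
   Context: $\mathrm{per}(\mathbf{A})=\sum_{\boldsymbol\sigma\in\mathbb{S}_n}\prod_{i=1}^n a_{i\sigma_i}$. The canonical permutation trellis $\mathcal{T}_n$ has layers $V_j$ = all $j$-subsets of $[n]$, an edge $(u,v)\in V_{j-1}\times V_j$ iff $u\subset v$, labeled by the $i$ with $v\setminus u=\{i\}$; $\mathcal{T}_n(\mathbf{B})$ relabels the edge from $V_{j-1}$ to $V_j$ with label $i$ by $b_{ij}$. The sum-product flow: $\mu(\mathrm{root})=1$, $\mu(v)=\sum_{(u,v)\in E}L(u,v)\mu(u)$; then $\mu(\mathrm{toor})=\mathrm{per}(\mathbf{B})$ on $\mathcal{T}_n(\mathbf{B})$. In $\mathcal{T}_n$, $|V|=2^n$, $|E|=n2^{n-1}$, and the number of edges from $V_{t-1}$ to $V_t$ is $(n-t+1)\binom{n}{t-1}$. *)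

(* Defs.v *)
From HB Require Import structures.
From mathcomp Require Import all_boot all_order all_algebra all_fingroup.
Set Implicit Arguments. Unset Strict Implicit. Unset Printing Implicit Defensive.
Import GRing.Theory.
Local Open Scope ring_scope.

(* Indices are 0-based: row/column i : 'I_n stands for i+1 in the paper. *)

Definition per (R : comNzRingType) (n : nat) (A : 'M[R]_n) : R :=
  \sum_(s : 'S_n) \prod_(i < n) A i (s i).

Definition mx_restrict (R : fieldType) (n : nat) (A : 'M[R]_n) (t : 'I_n) : 'M[R]_n :=
  \matrix_(i, j) (A i j / A i t).

(* The 0-based column index k as an element of 'I_n (default i if k >= n;
   never used out of range). *)
Definition col_of (n k : nat) (i : 'I_n) : 'I_n :=
  if insub k is Some j then j else i.

(* Vertices: all subsets of [n]; layer V_j = subsets of cardinality j. *)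
Definition trellis_V (n : nat) : {set {set 'I_n}} := setT.
Definition trellis_E (n : nat) : {set {set 'I_n} * {set 'I_n}} :=
  [set e : {set 'I_n} * {set 'I_n} | (e.1 \subset e.2) && (#|e.2| == #|e.1|.+1)].
Definition root (n : nat) : {set 'I_n} := set0.
Definition toor (n : nat) : {set 'I_n} := setT.

(* Sum-product flow on T_n(B): mu(root)=1,
   mu(v) = sum over in-edges (v\{i}, v), i in v, of label * mu(v\{i}),
   where the edge from V_{j-1} to V_j with label i carries b_{ij}
   (0-based column #|v|-1).  mu_aux k v is mu(v) for #|v| = k. *)
Fixpoint flow_aux (R : comNzRingType) (n : nat) (B : 'M[R]_n) (k : nat)
    (v : {set 'I_n}) : R :=
  match k with
  | 0 => 1
  | k'.+1 => \sum_(i in v) B i (col_of k' i) * flow_aux B k' (v :\ i)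
  end.
Definition flow (R : comNzRingType) (n : nat) (B : 'M[R]_n) (v : {set 'I_n}) : R :=
  flow_aux B #|v| v.

(* t is the 0-based column index (paper's t = floor(n/2)+1 is val t + 1);
   layer V_t of the paper is the set of v with #|v| = val t + 1. *)

Definition step1 (R : fieldType) (n : nat) (A : 'M[R]_n) (t : 'I_n) : 'M[R]_n :=
  \matrix_(i, j) (if j == t then 1 else A i j / A i t).

(* Step (ii): flow on T_n(C) where edges leaving the root contribute their label
   (mu(root) = 1, no multiplication) and edges entering layer V_t contribute
   mu(u) (label 1, no multiplication); other edges contribute label * mu(u). *)
Fixpoint step2_aux (R : comNzRingType) (n : nat) (C : 'M[R]_n) (t : 'I_n)
    (k : nat) (v : {set 'I_n}) : R :=
  match k with
  | 0 => 1
  | k'.+1 =>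
      \sum_(i in v)
        (if k' == 0%N then C i (col_of k' i)
         else if k'.+1 == (val t).+1 then step2_aux C t k' (v :\ i)
         else C i (col_of k' i) * step2_aux C t k' (v :\ i))
  end.

Definition procedure_value (R : fieldType) (n : nat) (A : 'M[R]_n) (t : 'I_n) : R :=
  foldl (fun x i => x * A i t) (step2_aux (step1 A t) t n (toor n)) (enum 'I_n).

(* multiplications/divisions: n(n-1) divisions in step (i), one multiplication
   per edge not leaving the root and not entering V_t in step (ii),
   n multiplications in step (iii). *)
Definition procedure_mults (n : nat) (t : 'I_n) : nat :=
  (#|[set ij : 'I_n * 'I_n | ij.2 != t]|
   + #|[set e in trellis_E n | (e.1 != root n) && (#|e.2| != (val t).+1)]|
   + n)%N.

(* additions: summing the d in-edge contributions at a non-root vertex takes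
   d - 1 additions (this totals |E| - |V| + 1). *)
Definition procedure_adds (n : nat) : nat :=
  (\sum_(v in trellis_V n | v != root n)
     (#|[set e in trellis_E n | e.2 == v]| - 1))%N.

(* Main.v *)
Require Import Defs.
From HB Require Import structures.
From mathcomp Require Import all_boot all_order all_algebra all_fingroup.
From mathcomp Require Import zify.
Import GRing.Theory.
Set Implicit Arguments. Unset Strict Implicit. Unset Printing Implicit Defensive.

Section Count.
Variable n : nat.
Local Notation I := ('I_n).

Lemma trellis_EP (e : {set I} * {set I}) :
  (e \in trellis_E n) = [exists i, (i \in e.2) && (e.1 == e.2 :\ i)].
Proof.
rewrite inE; apply/andP/existsP.
- case=> sub /eqP hc.
  have : e.1 \proper e.2 by rewrite properEcard sub hc ltnS leqnn.
  case/properP=> _ [x xin xnot]; exists x; rewrite xin /=.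
  rewrite eqEcard; apply/andP; split.
    apply/subsetP=> y yin; rewrite !inE (subsetP sub) // andbT.
    by apply: contraNneq xnot => <-.
  by move: hc; rewrite (cardsD1 x e.2) xin add1n => -[->].
- case=> i /andP [iin /eqP ->]; split; first exact: subD1set.
  by rewrite (cardsD1 i e.2) iin.
Qed.

Definition edge_of (p : {set I} * I) := (p.1 :\ p.2, p.1).

Lemma card_edges (Q : pred ({set I} * {set I})) :
  #|[set e in trellis_E n | Q e]| =
  #|[set p : {set I} * I | (p.2 \in p.1) && Q (edge_of p)]|.
Proof.
rewrite -(card_in_imset (f := edge_of)).
  apply: eq_card => e; rewrite in_set trellis_EP; apply/andP/imsetP.
  - case=> /existsP [i /andP [iin /eqP e1]] Qe; exists (e.2, i).
      by rewrite inE /= iin; move: Qe; case: e e1 iin => a b /= -> .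
    by case: e e1 {Qe iin} => a b /= ->.
  - case=> p; rewrite inE => /andP [pin Qp] ->; split => //.
    by apply/existsP; exists p.2; rewrite /= pin eqxx.
move=> [v i] [w j]; rewrite !inE /= => /andP [iv _] /andP [jw _] [e1 e2].
subst w; apply/eqP; rewrite xpair_eqE eqxx /=; apply/negPn/negP => ij.
have : i \in v :\ j by rewrite !inE iv ij.
by rewrite -e1 !inE eqxx.
Qed.

Lemma card_pairs (R : pred {set I}) :
  #|[set p : {set I} * I | (p.2 \in p.1) && R p.1]| = \sum_(v | R v) #|v|.
Proof.
rewrite cardsE -sum1_card.
rewrite (eq_bigl (fun p : {set I} * I => R p.1 && (p.2 \in p.1))); last first.
  by move=> p /=; rewrite unfold_in /= andbC.
rewrite -(pair_big_dep (fun v => R v) (fun v i => i \in v) (fun _ _ => 1%N)) /=.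
by apply: eq_bigr => v _; rewrite sum1_card.
Qed.

Lemma card_sets : #|{set I}| = 2 ^ n.
Proof. by rewrite -cardsT -powersetT card_powerset cardsT card_ord. Qed.

Lemma sum_card_double : (\sum_(v : {set I}) #|v|) * 2 = n * 2 ^ n.
Proof.
rewrite muln2 -addnn {2}(reindex_inj (@setC_inj _)) /= -big_split /=.
rewrite (eq_bigr (fun _ => n)); last by move=> v _; rewrite cardsC card_ord.
by rewrite sum_nat_const card_sets mulnC.
Qed.

Lemma sum_card : (0 < n)%N -> \sum_(v : {set I}) #|v| = n * 2 ^ n.-1.
Proof.
move=> n0; apply/eqP; rewrite -(eqn_pmul2r (isT : 0 < 2)%N) sum_card_double.
by rewrite -mulnA -expnSr prednK.
Qed.

Lemma sum_card_k k : \sum_(v : {set I} | #|v| == k) #|v| = k * 'C(n, k).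
Proof.
rewrite (eq_bigr (fun _ => k)); last by move=> v /eqP.
have := card_draws I k; rewrite card_ord => <-.
by rewrite sum_nat_const mulnC; congr (_ * _)%N; apply: eq_card=> v; rewrite inE.
Qed.

Lemma in_edges_card (v : {set I}) : #|[set e in trellis_E n | e.2 == v]| = #|v|.
Proof.
rewrite card_edges.
have := card_pairs (fun w => w == v); rewrite big_pred1_eq => <-.
by apply: eq_card => p; rewrite !inE.
Qed.

Lemma adds_eq : (0 < n)%N -> procedure_adds n + (2 ^ n - 1) = n * 2 ^ n.-1.
Proof.
move=> n0; rewrite /procedure_adds -sum_card // [RHS](bigD1 set0) //= cards0 add0n.
rewrite [X in (X + _)%N](eq_bigl (fun v : {set I} => v != set0)); last by move=> v; rewrite /trellis_V inE.
rewrite (eq_bigr (fun v : {set I} => #|v| - 1)%N); last by move=> v _; rewrite in_edges_card.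
have -> : (2 ^ n - 1 = \sum_(v : {set I} | v != set0) 1)%N.
  rewrite sum1_card -card_sets [X in (X - 1)%N](cardD1 set0) inE add1n subn1 /=.
  by apply: eq_card => v; rewrite !inE andbT.
rewrite -big_split /=; apply: eq_bigr => v vn0.
by rewrite subnK // lt0n cards_eq0.
Qed.

Lemma mults_eq (t : nat) : (0 < t)%N -> (0 < n)%N ->
  #|[set e in trellis_E n | (e.1 != Defs.root n) && (#|e.2| != t.+1)]| + n
    + t.+1 * 'C(n, t.+1) = n * 2 ^ n.-1.
Proof.
move=> t0 n0.
have -> : #|[set e in trellis_E n | (e.1 != Defs.root n) && (#|e.2| != t.+1)]| =
   \sum_(v : {set I} | (#|v| != 1%N) && (#|v| != t.+1)) #|v|.
  rewrite card_edges -card_pairs; apply: eq_card => -[v i]; rewrite !inE /=.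
  case iv: (i \in v) => //=; congr (_ && _).
  by rewrite [in RHS](cardsD1 i v) iv add1n eqSS cards_eq0.
rewrite -sum_card //.
have E1 := @bigID _ 0%N addn _ (index_enum {set I}) (fun v : {set I} => #|v| == 1%N) predT (fun v : {set I} => #|v|).
have E2 := @bigID _ 0%N addn _ (index_enum {set I}) (fun v : {set I} => #|v| == t.+1) (fun v : {set I} => #|v| != 1%N) (fun v : {set I} => #|v|).
rewrite /= in E1 E2.
rewrite sum_card_k mul1n bin1 in E1.
rewrite [X in (_ = X + _)%N](eq_bigl (fun v : {set I} => #|v| == t.+1)) ?sum_card_k in E2; last first.
  by move=> v; case: (#|v| =P t.+1) => [->|_]; rewrite ?andbF ?andbT // eqSS -lt0n.
rewrite E1 E2 (addnC _ n) -addnA; congr (_ + _)%N; rewrite addnC; congr (_ + _)%N.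
Qed.
End Count.

Local Open Scope ring_scope.

Section Flow.
Variable n : nat.
Local Notation I := ('I_n).

Lemma col_of_ord (j i : I) : col_of (val j) i = j.
Proof. by rewrite /col_of valK. Qed.

Definition J (k : nat) : {set I} := [set j : I | (j < k)%N].

Lemma J0 : J 0 = set0.
Proof. by apply/setP => j; rewrite !inE. Qed.

Lemma JS k (hk : (k < n)%N) : J k.+1 = Ordinal hk |: J k.
Proof. by apply/setP => j; rewrite !inE ltnS leq_eqVlt -val_eqE. Qed.

Lemma card_J k : (k <= n)%N -> #|J k| = k.
Proof.
elim: k => [|k IH] hk; first by rewrite J0 cards0.
by rewrite (JS hk) cardsU1 IH ?(ltnW hk) // inE /= ltnn add1n.
Qed.

Definition S (k : nat) (v : {set I}) : {set {ffun I -> I}} :=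
  [set g : {ffun I -> I} | [forall j : I, (k <= j)%N ==> (g j == j)] && (g @: J k == v)].

Definition upd (g : {ffun I -> I}) (c x : I) : {ffun I -> I} :=
  [ffun j => if j == c then x else g j].


Lemma updE g c x j : upd g c x j = if j == c then x else g j.
Proof. by rewrite ffunE. Qed.

Lemma S_step k (hk : (k < n)%N) (v : {set I}) i g :
  i \in v -> #|v| = k.+1 ->
  (upd g (Ordinal hk) (Ordinal hk) \in S k (v :\ i))
    && (upd (upd g (Ordinal hk) (Ordinal hk)) (Ordinal hk) i == g)
  = (g \in S k.+1 v) && (g (Ordinal hk) == i).
Proof.
set c := Ordinal hk => iv hv.
have -> : (upd (upd g c c) c i == g) = (g c == i).
  apply/eqP/eqP => [<-|gc]; first by rewrite updE eqxx.
  by apply/ffunP => j; rewrite !updE; case: eqP => // ->.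
case: eqP => gc; last by rewrite !andbF.
rewrite !andbT !inE; congr (_ && _).
  apply/forallP/forallP => H j; have := H j; rewrite updE.
    case: (j =P c) => [-> _|jc h]; first by rewrite /= ltnn.
    by apply/implyP => kj; exact: (implyP h (ltnW kj)).
  case: (j =P c) => [-> _|jc h]; first by rewrite eqxx implybT.
  apply/implyP => kj; apply: (implyP h); rewrite ltn_neqAle kj andbT.
  by apply/eqP => kj2; apply: jc; apply: val_inj; rewrite /= -kj2.
have -> : [set upd g c c x | x in J k] = [set g x | x in J k].
  apply: eq_in_imset => j; rewrite inE updE => jk.
  by case: eqP => // jc; move: jk; rewrite jc /= ltnn.
rewrite (JS hk) imsetU1 gc.
have hX : (#|[set g x | x in J k]| <= k)%N.
  by apply: leq_trans (leq_imset_card _ _) _; rewrite card_J // ltnW.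
apply/eqP/eqP => [->|hv2]; first by rewrite setD1K.
have iX : i \notin [set g x | x in J k].
  apply/negP => iX; move: hv2; rewrite (setUidPr _) ?sub1set // => hv2.
  by move: hX; rewrite hv2 hv ltnn.
by rewrite -hv2 setU1K.
Qed.

Variable R : comNzRingType.
Variable B : 'M[R]_n.

Lemma flow_sum k (v : {set I}) : (k <= n)%N -> #|v| = k ->
  flow_aux B k v = \sum_(g in S k v) \prod_(j in J k) B (g j) j.
Proof.
elim: k v => [|k IH] v hk hv.
  have -> : v = set0 by apply: cards0_eq.
  have -> : S 0 set0 = [set [ffun j => j]].
    apply/setP => g; rewrite !inE J0 imset0 eqxx andbT.
    apply/forallP/eqP => [H|->]; last by move=> j; rewrite ffunE eqxx.
    by apply/ffunP => j; rewrite ffunE; apply/eqP; exact: H j.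
  by rewrite big_set1 J0 big_set0.
set c : I := Ordinal hk.
rewrite /= (eq_bigr (fun i => B i c * \sum_(h in S k (v :\ i)) \prod_(j in J k) B (h j) j)); last first.
  move=> i iv; rewrite (col_of_ord c) IH ?(ltnW hk) //.
  by move: hv; rewrite (cardsD1 i v) iv add1n => -[].
rewrite (partition_big (fun g : {ffun I -> I} => g c) (mem v)) /=; last first.
  move=> g; rewrite inE => /andP [_ /eqP <-]; apply/imsetP; exists c => //.
  by rewrite inE /= ltnSn.
apply: eq_bigr => i iv; rewrite mulr_sumr.
rewrite (reindex_onto (fun g => upd g c c) (fun h => upd h c i)); last first.
  move=> h; rewrite inE => /andP [/forallP H _]; apply/ffunP => j; rewrite !updE.
  by case: eqP => // ->; apply/esym/eqP; have := H c; rewrite /= leqnn.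
apply: eq_big => g; first exact: S_step.
case/andP=> _ /eqP gc.
rewrite (JS hk) big_setU1 /=; last by rewrite inE /= ltnn.
have gci : g c = i by rewrite -gc updE eqxx.
rewrite -/c gci; congr (_ * _); apply: eq_bigr => j; rewrite inE updE => jk.
by case: eqP => // jc; move: jk; rewrite jc /= ltnn.
Qed.

Lemma flow_per : flow B setT = per B.
Proof.
rewrite /flow cardsT card_ord flow_sum // ?cardsT ?card_ord //.
have JT : J n = setT by apply/setP => j; rewrite !inE ltn_ord.
rewrite JT /per (reindex_inj invg_inj) /=.
rewrite (eq_bigr (fun s : 'S_n => \prod_j B (s j) j)); last first.
  move=> s _; rewrite (reindex_inj (@perm_inj _ s)) /=.
  by apply: eq_bigr => j _; rewrite permK.
symmetry.
rewrite (reindex_onto (fun s : 'S_n => val s) (fun g => insubd (1%g : 'S_n) g)); last first.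
  move=> g; rewrite inE => /andP [_ /eqP gT]; rewrite val_insubd.
  suff -> : injectiveb g by [].
  have /imset_injP inj : #|[set g x | x in J n]| == #|J n| by rewrite gT JT.
  by apply/injectiveP => x y; apply: inj; rewrite JT inE.
apply: eq_big => s; last first.
  move=> _; apply: eq_big => j; first by rewrite in_setT.
  by rewrite -[val s]/(pval s) pvalE.
have -> : insubd (1%g : 'S_n) (val s) = s by apply: val_inj; rewrite val_insubd (valP s).
rewrite eqxx andbT inE JT; symmetry; apply/andP; split.
  by apply/forallP => j; rewrite leqNgt ltn_ord.
rewrite eqEcard subsetT /= cardsT card_imset ?cardsT //.
by move=> x y; rewrite pvalE; exact: perm_inj.
Qed.
End Flow.


Section Main.
Variable R : comNzRingType.

Lemma step2_flow n (C : 'M[R]_n) (t : 'I_n) : (forall i, C i t = 1) ->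
  forall k v, step2_aux C t k v = flow_aux C k v.
Proof.
move=> Ct; elim=> [|k IH] v //=; apply: eq_bigr => i _.
case: eqP => [-> /=|k0]; first by rewrite mulr1.
case: eqP => [[kt]|_]; last by congr (_ * _); exact: IH.
by rewrite kt (col_of_ord t) Ct mul1r -kt; exact: IH.
Qed.

End Main.

Lemma foldl_mul (R : comNzRingType) (T : Type) (f : T -> R) (y : R) (s : seq T) :
  foldl (fun x i => x * f i) y s = y * \prod_(i <- s) f i.
Proof.
elim: s y => [|a s IH] y /=; first by rewrite big_nil mulr1.
by rewrite IH big_cons mulrA.
Qed.

Unset Implicit Arguments.

Theorem theorem4 (R : fieldType) (n : nat) (A : 'M[R]_n) (t : 'I_n) :
  (2 <= n)%N ->
  val t = n./2 ->
  (forall i : 'I_n, A i t != 0) ->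
  [/\ per A = (\prod_(i < n) A i t) * per (mx_restrict A t),
      procedure_value A t = per A,
      (procedure_mults t)%:Z =
        (n * 2 ^ n.-1)%:Z - (uphalf n * 'C(n, n./2))%:Z + (n ^ 2)%:Z - n%:Z
    & procedure_adds n = ((n - 2) * 2 ^ n.-1 + 1)%N].
Proof.
move=> n2 ht Anz.
have n0 : (0 < n)%N by apply: leq_trans n2.
have hper : per A = (\prod_(i < n) A i t) * per (mx_restrict A t).
  rewrite /per mulr_sumr; apply: eq_bigr => s _.
  rewrite -big_split /=; apply: eq_bigr => i _.
  by rewrite mxE mulrCA divff // mulr1.
have hres : step1 A t = mx_restrict A t.
  apply/matrixP => i j; rewrite !mxE; case: eqP => // ->.
  by rewrite divff.
split => //.
- rewrite /procedure_value foldl_mul big_enum hres step2_flow; last first.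
    by move=> i; rewrite mxE divff.
  have := flow_per (mx_restrict A t); rewrite /flow cardsT card_ord /toor => ->.
  by rewrite hper mulrC.
- have c1 : #|[set ij : 'I_n * 'I_n | ij.2 != t]| = (n * n.-1)%N.
    have -> : [set ij : 'I_n * 'I_n | ij.2 != t] = setX [set: 'I_n] [set~ t].
      by apply/setP => -[i j]; rewrite !inE.
    by rewrite cardsX cardsT cardsC1 card_ord.
  have t0 : (0 < val t)%N by rewrite ht; exact: (half_leq n2).
  have m := mults_eq t0 n0.
  have hb : ((val t).+1 * 'C(n, (val t).+1) = uphalf n * 'C(n, n./2))%N.
    rewrite -mul_bin_diag mul_bin_down ht; congr (_ * _)%N.
    have := odd_double_half n; rewrite uphalf_half -addnn; lia.
  rewrite hb in m; rewrite /procedure_mults c1.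
  move: m; set X := #|_|; set P := (n * 2 ^ n.-1)%N; set Q := (uphalf n * _)%N.
  have hn2 : (n ^ 2 = n * n.-1 + n)%N.
    by rewrite -mulnSr prednK // mulnn.
  rewrite hn2; set M := (n * n.-1)%N; move=> <-.
  lia.
- have := adds_eq n0.
  have e2 : (2 ^ n = 2 * 2 ^ n.-1)%N by rewrite -expnS prednK.
  have x1 : (0 < 2 ^ n.-1)%N by rewrite expn_gt0.
  rewrite e2 mulnBl; set X := (2 ^ n.-1)%N.
  have hY : (2 * X <= n * X)%N by rewrite leq_mul2r n2 orbT.
  move: hY; set Y := (n * X)%N; lia.
Qed.
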